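(* Let $\mathcal K\subseteq\mathbb R^n$ be convex, $f:\mathcal K\to\mathbb R$ convex and differentiable with a minimizer $x^\star\in\mathcal K$. Let $x_1,x_2,\dots\in\mathcal K$ be arbitrary, let $w_0,w_1,\dots$ be positive numbers, and define $\bar x_t=\frac{\sum_{k=0}^tw_kx_{k+1}}{\sum_{k=0}^tw_k}$. Let $\tilde\eta_0\ge\tilde\eta_1\ge\tilde\eta_2\ge\cdots$ be positive numbers. Then for every $T>0$, \[ \sum_{t=0}^{T-1}w_t\tilde\eta_t\langle\nabla f(\bar x_t),x_{t+1}-x^\star\rangle\ge0. \] *)

(* Defs.v *)
From HB Require Import structures.
From mathcomp Require Import all_boot all_order all_algebra.
From mathcomp Require Import all_classical all_reals all_analysis.
Set Implicit Arguments. Unset Strict Implicit. Unset Printing Implicit Defensive.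
Import Order.TTheory GRing.Theory Num.Theory.
Import numFieldNormedType.Exports.
Local Open Scope classical_set_scope.
Local Open Scope ring_scope.

Definition convex_setK (R : realType) (n : nat) (K : set 'rV[R]_n) :=
  forall x y (t : R), K x -> K y -> 0 <= t <= 1 -> K (t *: x + (1 - t) *: y).

Definition convex_on (R : realType) (n : nat) (K : set 'rV[R]_n)
  (f : 'rV[R]_n -> R) :=
  forall x y (t : R), K x -> K y -> 0 <= t <= 1 ->
    f (t *: x + (1 - t) *: y) <= t * f x + (1 - t) * f y.

Definition dotp (R : realType) (n : nat) (u v : 'rV[R]_n) : R :=
  \sum_(i < n) u 0 i * v 0 i.

Definition grad (R : realType) (n : nat) (f : 'rV[R]_n -> R) (x : 'rV[R]_n)
  : 'rV[R]_n :=
  \row_i ('d f x (delta_mx 0 i : 'rV[R]_n)).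

Definition wavg (R : realType) (n : nat) (w : nat -> R) (x : nat -> 'rV[R]_n)
  (t : nat) : 'rV[R]_n :=
  (\sum_(k < t.+1) w k)^-1 *: \sum_(k < t.+1) w k *: x k.+1.

(* Main.v *)
Require Import Defs.
From HB Require Import structures.
From mathcomp Require Import all_boot all_order all_algebra.
From mathcomp Require Import all_classical all_reals all_analysis.
From mathcomp Require Import ring lra.
Import Order.TTheory GRing.Theory Num.Theory.
Import numFieldNormedType.Exports.
Local Open Scope classical_set_scope.
Local Open Scope ring_scope.

Lemma grad_ineq (R : realType) (n : nat) (K : set 'rV[R]_n)
  (f : 'rV[R]_n -> R) (x y : 'rV[R]_n) :
  convex_on K f -> K x -> K y -> differentiable f x ->
  'd f x (y - x) <= f y - f x.
Proof.
move=> cf Kx Ky dfx.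
rewrite -deriveE //.
have := @diff_derivable _ _ _ f x (y - x) dfx.
rewrite /derivable => /cvg_ex [l Hl].
have -> : 'D_(y - x) f x = l by rewrite /derive; exact: cvg_lim.
have Hr : (fun h : R => h^-1 *: ((f \o shift x) (h *: (y - x)) - f x)) @ 0^'+ --> l.
  apply: cvg_trans Hl; apply: cvg_app; apply: within_subset => h /= h0; by rewrite gt_eqF.
have := @closed_cvg _ R _ _ _ (fun z : R => z <= f y - f x) (closed_le (y := f y - f x)) _ l Hr.
apply; near=> h.
have h0 : 0 < h by near: h; exact: nbhs_right_gt.
have h1 : h <= 1 by near: h; exact: nbhs_right_le.
have := cf y x h Ky Kx; rewrite h1 ltW // => /(_ isT).
rewrite /= /shift.
have -> : h *: y + (1 - h) *: x = h *: (y - x) + x.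
  by rewrite scalerBr scalerBl scale1r addrA addrAC.
move=> H.
rewrite /= -[X in _ <= X](mulKf (lt0r_neq0 h0)) ler_pM2l ?invr_gt0 //.
rewrite lerBlDr (le_trans H) //.
by rewrite mulrBl mul1r mulrBr addrA addrAC.
Unshelve. all: by end_near.
Qed.

Arguments grad_ineq {R n K f x y}.

Lemma dotp_grad (R : realType) (n : nat) (f : 'rV[R]_n -> R) (x v : 'rV[R]_n) :
  dotp (grad f x) v = 'd f x v.
Proof.
rewrite /dotp /grad [in RHS](row_sum_delta v) linear_sum /=.
apply: eq_bigr => i _; rewrite mxE linearZ /= mulrC.
by [].
Qed.

Lemma telesc (R : realType) (eta D : nat -> R) (T : nat) :
  (forall t, 0 <= D t) -> D 0%N = 0 -> (forall t, eta t.+1 <= eta t) ->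
  eta T * D T <= \sum_(t < T) eta t * (D t.+1 - D t).
Proof.
move=> D0 D00 etad; elim: T => [|T IH]; first by rewrite big_ord0 D00 mulr0.
rewrite big_ord_recr /=.
apply: le_trans (lerD IH (lexx _)).
rewrite mulrBr addrCA subrr addr0.
by apply: ler_wpM2r.
Qed.
Arguments telesc {R eta D}.

Theorem lemma17 (R : realType) (n : nat) (K : set 'rV[R]_n)
  (f : 'rV[R]_n -> R) (xstar : 'rV[R]_n)
  (x : nat -> 'rV[R]_n) (w eta : nat -> R) (T : nat) :
  convex_setK K ->
  convex_on K f ->
  (forall y, K y -> differentiable f y) ->
  K xstar -> (forall y, K y -> f xstar <= f y) ->
  (forall k, K (x k.+1)) ->
  (forall k, 0 < w k) ->
  (forall t, 0 < eta t) ->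
  (forall t, eta t.+1 <= eta t) ->
  (0 < T)%N ->
  0 <= \sum_(t < T) w t * eta t * dotp (grad f (wavg w x t)) (x t.+1 - xstar).
Proof.
move=> cK cf df Kxs fmin Kx w0 eta0 etad _.
pose P t := \sum_(k < t) w k.
pose S t := \sum_(k < t) w k *: x k.+1.
pose B t := (P t)^-1 *: S t.
pose D t := P t * (f (B t) - f xstar).
have PS t : P t.+1 = P t + w t by rewrite /P big_ord_recr.
have SS t : S t.+1 = S t + w t *: x t.+1 by rewrite /S big_ord_recr.
have Pge0 t : 0 <= P t by apply: sumr_ge0 => i _; exact: ltW.
have Pgt0 t : 0 < P t.+1 by rewrite PS ltr_wpDl.
have PB t : P t *: B t = S t.
  case: t => [|t]; first by rewrite /B /P /S !big_ord0 scale0r.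
  by rewrite /B scalerA mulfV ?scale1r // lt0r_neq0.
have KB t : K (B t.+1).
  elim: t => [|t IH].
    by rewrite /B /P /S !big_ord1 scalerA mulVf ?scale1r ?lt0r_neq0.
  have -> : B t.+2 = (P t.+1 / P t.+2) *: B t.+1 + (1 - P t.+1 / P t.+2) *: x t.+2.
    have -> : 1 - P t.+1 / P t.+2 = w t.+1 / P t.+2.
      rewrite [in P t.+2]PS; field; rewrite -PS; exact: lt0r_neq0.
    rewrite mulrC [w _ / _]mulrC -!scalerA -scalerDr PB /B SS //.
  apply: cK => //.
  rewrite divr_ge0 ?ltW //=; by rewrite ltr_pdivrMr // mul1r [P t.+2]PS ltrDl.
have step t : D t.+1 - D t <= w t * dotp (grad f (B t.+1)) (x t.+1 - xstar).
  clearbody B.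
  rewrite dotp_grad.
  have e : w t *: (x t.+1 - xstar) = w t *: (B t.+1 - xstar) + P t *: (B t.+1 - B t).
    have e1 : w t *: x t.+1 = P t.+1 *: B t.+1 - P t *: B t by rewrite !PB SS addrAC subrr add0r.
    apply/rowP => j; have := congr1 (fun M : 'rV[R]_n => M 0 j) e1; rewrite PS !mxE => e1j.
    rewrite mulrBr e1j; ring.
  rewrite -linearZ /= e linearD !linearZ /=.
  have g1 : f (B t.+1) - f xstar <= 'd f (B t.+1) (B t.+1 - xstar).
    rewrite -[B t.+1 - xstar]opprB linearN lerNr opprB; exact: (grad_ineq cf (KB t) Kxs (df _ (KB t))).
  have g2 : P t * (f (B t.+1) - f (B t)) <= P t * 'd f (B t.+1) (B t.+1 - B t).
    case: t e g1 => [|t] _ _; first by rewrite /P big_ord0 !mul0r.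
    apply: ler_wpM2l => //.
    rewrite -[B t.+2 - B t.+1]opprB linearN lerNr opprB; exact: (grad_ineq cf (KB t.+1) (KB t) (df _ (KB t.+1))).
  apply: le_trans _ (lerD (ler_wpM2l (ltW (w0 t)) g1) g2).
  rewrite /D PS le_eqVlt; apply/orP; left; apply/eqP.
  rewrite -[P t *: _]/(P t * _); ring.
have D00 : D 0%N = 0 by rewrite /D /P big_ord0 mul0r.
have Dge0 t : 0 <= D t.
  case: t => [|t]; first by rewrite D00.
  by rewrite /D mulr_ge0 // subr_ge0 fmin.
apply: le_trans (mulr_ge0 (ltW (eta0 T)) (Dge0 T)) _.
apply: le_trans (telesc T Dge0 D00 etad) _.
apply: ler_sum => t _.
rewrite [w t * _]mulrC -mulrA; apply: ler_wpM2l; first exact: ltW.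
exact: step.
Qed.
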